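(* Let $p$ be a prime and let $G$ be a nontrivial finite abelian $p$-group. Then $n_G=\exp(G)$ if and only if $G$ is either cyclic or elementary abelian.
   Context: For a finite group $G$ and $x\in G$, let $I_{\mathcal C}(x)=\{y\in G : \langle x,y\rangle \text{ is cyclic}\}$. For a nontrivial finite group $G$, $n_G=\max\{|I_{\mathcal C}(x)| : x\in G\setminus\{1\}\}$. $\exp(G)$ denotes the exponent of $G$. *)

(* Defs.v *)
From mathcomp Require Import all_boot all_fingroup all_solvable.
Set Implicit Arguments. Unset Strict Implicit. Unset Printing Implicit Defensive.
Local Open Scope group_scope.

Definition cyclicizer (gT : finGroupType) (G : {set gT}) (x : gT) : {set gT} :=
  [set y in G | cyclic <<[set x; y]>>].

Definition nG (gT : finGroupType) (G : {set gT}) : nat :=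
  \max_(x in G^#) #|cyclicizer G x|.

(* Main.v *)
Require Import Defs.
From mathcomp Require Import all_boot all_fingroup all_solvable.
Local Open Scope group_scope.

Lemma cyc_in (gT : finGroupType) (x y z : gT) :
  x \in <[z]> -> y \in <[z]> -> cyclic <<[set x; y]>>.
Proof.
move=> xz yz; apply: (cyclicS _ (cycle_cyclic z)).
by rewrite gen_subG subUset !sub1set xz yz.
Qed.

Lemma nG_const (gT : finGroupType) (G : {group gT}) c :
  G :!=: 1 -> (forall x, x \in G^# -> #|cyclicizer G x| = c) -> nG G = c.
Proof.
move=> ntG Hc; apply/eqP; rewrite eqn_leq; apply/andP; split.
  by apply/bigmax_leqP => x Gx; rewrite Hc.
have [x Gx nx] := trivgPn _ ntG.
have Gx' : x \in G^# by rewrite !inE nx Gx.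
rewrite -(Hc x Gx').
by apply: (leq_bigmax_cond x Gx').
Qed.

Theorem proposition2p5 (p : nat) (gT : finGroupType) (G : {group gT}) :
  prime p -> p.-group G -> abelian G -> G :!=: 1 ->
  (nG G = exponent G <-> cyclic G \/ p.-abelem G).
Proof.
move=> pr pG cAG ntG; split; last first.
  case=> [cycG | abG].
    rewrite (exponent_cyclic cycG); apply: nG_const => // x /setD1P[_ Gx].
    suff -> : cyclicizer G x = G by [].
    apply/setP => y; rewrite inE.
    case Gy: (y \in G) => //=; apply: cyclicS cycG.
    by rewrite gen_subG subUset !sub1set Gx Gy.
  have [x0 Gx0 nx0] := trivgPn _ ntG.
  have expp : exponent G = p.
    apply/eqP; rewrite eqn_dvd.
    move: (abG); rewrite abelemE // => /andP[_ ->] /=.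
    by rewrite -(abelem_order_p abG Gx0 nx0) dvdn_exponent.
  rewrite expp; apply: nG_const => // x /setD1P[nx Gx].
  rewrite -(abelem_order_p abG Gx nx) /order.
  suff -> : cyclicizer G x = <[x]> by [].
  apply/setP => y.
  rewrite inE; apply/andP/idP.
    case=> Gy cyc.
    set H := <<[set x; y]>>.
    have sHG : H \subset G by rewrite gen_subG subUset !sub1set Gx Gy.
    have xH : x \in H by rewrite mem_gen // !inE eqxx.
    have yH : y \in H by rewrite mem_gen // !inE eqxx orbT.
    have ntH : H :!=: 1 by apply/trivgPn; exists x.
    have cardH := cyclic_abelem_prime (abelemS sHG abG) cyc ntH.
    have : <[x]> == H.
      rewrite eqEcard cycle_subG xH cardH /=.
      by rewrite -/(order x) (abelem_order_p abG Gx nx).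
    by move/eqP => ->.
  move=> yx; split; first by apply: (subsetP _ y yx); rewrite cycle_subG.
  exact: (@cyc_in _ _ _ _ (cycle_id x) yx).
move=> eqn; case cycG: (cyclic G); [by left | right].
apply/negP => nab.
have [g Gg expg] := exponent_witness (abelian_nil cAG).
have pg : p.-nat #[g] by apply: mem_p_elt pG Gg.
have [k ek] := p_natP pg.
have p1 : 1 < p by apply: prime_gt1.
case: k ek => [|[|k']] ek.
  by move: nab; rewrite abelemE // cAG expg ek expn0 dvd1n.
  by move: nab; rewrite abelemE // cAG expg ek expn1 dvdnn.
set x := g ^+ (p ^ k'.+1).
have nx : x != 1.
  by rewrite /x -order_dvdn ek dvdn_Pexp2l // ltnn.
have Gx : x \in G^# by rewrite !inE nx groupX.
have : [exists y, [&& y \in G, y ^+ p == 1 & y \notin <[g]>]].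
  apply: contraT => H.
  move: cycG; rewrite abelian_rank1_cyclic // (rank_pgroup pG) -p_rank_Ohm1.
  move=> Hc; rewrite -Hc.
  have sO : 'Ohm_1(G) \subset <[g]>.
    rewrite (OhmE 1 pG) gen_subG; apply/subsetP => z; rewrite !inE => /andP[Gz zp].
    case: (boolP (z \in <[g]>)) => // zg; case/negP: H; apply/existsP; exists z.
    by rewrite Gz zg; rewrite expn1 in zp; rewrite zp.
  apply: leq_trans (p_rankS p sO) _; apply: leq_trans (p_rank_le_rank p _) _.
  by rewrite rank_cycle; case: (_ != 1).
case/existsP => y /and3P[Gy yp yg].
have cgy : commute g y by apply: (centsP cAG).
set z := g * y.
have Gz : z \in G by rewrite groupM.
have zg : z \notin <[g]>.
  apply: contra yg => zg.
  by rewrite -(mulKg g y) groupM ?groupV ?cycle_id.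
have xz : x \in <[z]>.
  have -> : x = z ^+ (p ^ k'.+1).
    by rewrite /z expgMn // expnS !expgM (eqP yp) expg1n mulg1 -expgM -expnS.
  exact: mem_cycle z _.
have sgC : <[g]> \subset cyclicizer G x.
  apply/subsetP => h hg; have sgG : <[g]> \subset G by rewrite cycle_subG.
  rewrite inE (subsetP sgG _ hg) /=.
  exact: (@cyc_in _ _ _ _ (mem_cycle g _) hg).
have zC : z \in cyclicizer G x.
  by rewrite inE Gz /=; exact: (@cyc_in _ _ _ _ xz (cycle_id z)).
have lt : #|<[g]>| < #|cyclicizer G x|.
  apply: proper_card; rewrite properE sgC /=.
  by apply/subsetPn; exists z.
have : #|cyclicizer G x| <= nG G by apply: (leq_bigmax_cond x Gx).
by rewrite eqn expg -/(order g) => /(leq_trans lt); rewrite ltnn.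
Qed.
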